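(* Let $n,d\ge 0$ be integers and let $G\subseteq\mathbb{N}$ be infinite (so $G\approx\omega$). Then there exists $H\subseteq\omega^d$ with $H\approx\omega^d$ such that every $e\in\binom{H}{n}$ satisfies some coloring rule on $\binom{\omega^d}{n}$, and every coefficient of every element of $e$ lies in $G$.
   Context: Ordinals are identified with the sets of smaller ordinals; $\approx$ is order-equivalence; $\binom{S}{n}$ is the set of $n$-element subsets of $S$. Every $\beta<\omega^d\cdot k$ ($d,k\ge0$) is uniquely written $\beta=\omega^d\cdot b+\omega^{d-1}a_{d-1}+\cdots+\omega a_1+a_0$ with $0\le b<k$, $a_j\in\mathbb{N}$; the numbers $a_0,\dots,a_{d-1}$ are called the coefficients of $\beta$; here $\omega^d=\omega^d\cdot1$. A coloring rule (CR) on $\binom{\omega^d\cdot k}{n}$ is a pair $(\mathcal{Y},\preceq)$ with $\mathcal{Y}:\{1,\dots,n\}\to\{0,\dots,k-1\}$ and $\preceq$ a total preorder on $I=\{(i,j):1\le i\le n,0\le j<d\}$ (write $\equiv$ for the induced equivalence and $\prec$ for the strict part) such that: (1) if $d\ge1$, $(i,0)\prec(i',0)$ for $i<i'$; if $d=0$, $\mathcal{Y}(i)<\mathcal{Y}(i')$ for $i<i'$; (2) $(i,j)\equiv(i',j)$ for some $j$ implies $\mathcal{Y}(i)=\mathcal{Y}(i')$; (3) $(i,j)\prec(i,j')$ for $j>j'$; (4) $(i,j)\equiv(i',j')$ implies $j=j'$; (5) for $j>0$, $(i,j)\not\equiv(i',j)$ implies $(i,j-1)\not\equiv(i',j-1)$.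 An edge $e\in\binom{\omega^d\cdot k}{n}$ satisfies the CR $(\mathcal{Y},\preceq)$ if its elements can be enumerated as $p_i=\omega^d b_i+\sum_{j<d}\omega^j a_{i,j}$ ($1\le i\le n$) so that $b_i=\mathcal{Y}(i)$ for all $i$ and $(i,j)\preceq(i',j')\iff a_{i,j}\le a_{i',j'}$ for all $(i,j),(i',j')\in I$. *)

(* Defs.v *)
From mathcomp Require Import all_boot.
Set Implicit Arguments. Unset Strict Implicit. Unset Printing Implicit Defensive.

(* An ordinal beta < omega^d * k, written
   beta = omega^d * b + omega^(d-1) a_(d-1) + ... + a_0,
   is represented by the pair (b, a) with b : 'I_k and a j = a_j (j < d).
   This is a bijective representation (Cantor normal form). *)
Definition ordlt (d k : nat) := ('I_k * {ffun 'I_d -> nat})%type.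

Definition olt (d k : nat) (x y : ordlt d k) : Prop :=
  (x.1 < y.1)%N \/
  (x.1 = y.1 /\ exists j : 'I_d, (x.2 j < y.2 j)%N /\
                 forall j' : 'I_d, (j < j')%N -> x.2 j' = y.2 j').

Definition order_equiv_full (d k : nat) (H : ordlt d k -> Prop) : Prop :=
  exists f : ordlt d k -> ordlt d k,
    (forall x, H (f x)) /\ (forall y, H y -> exists x, f x = y) /\
    (forall x y, olt x y <-> olt (f x) (f y)).

Definition is_nsubset (d k n : nat) (H : ordlt d k -> Prop) (e : seq (ordlt d k)) :=
  [/\ uniq e, size e = n & forall x, x \in e -> H x].

(* Coloring rule (Y, le) on [omega^d * k]^n; indices i in 1..n are shifted to
   'I_n (0..n-1); I = 'I_n * 'I_d; le is the preorder on I. *)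
Definition is_CR (n d k : nat) (Y : 'I_n -> 'I_k)
    (le : 'I_n * 'I_d -> 'I_n * 'I_d -> bool) : Prop :=
  let eqv u v := le u v && le v u in
  let lt u v := le u v && ~~ le v u in
  (forall u v, le u v || le v u) /\
  (forall u v w, le u v -> le v w -> le u w) /\
  ((0 < d)%N -> forall (j : 'I_d) (i i' : 'I_n), val j = 0 -> (i < i')%N ->
      lt (i, j) (i', j)) /\
  (d = 0 -> forall i i' : 'I_n, (i < i')%N -> (Y i < Y i')%N) /\
  (forall (i i' : 'I_n) (j : 'I_d), eqv (i, j) (i', j) -> Y i = Y i') /\
  (forall (i : 'I_n) (j j' : 'I_d), (j' < j)%N -> lt (i, j) (i, j')) /\
  (forall (i i' : 'I_n) (j j' : 'I_d), eqv (i, j) (i', j') -> j = j') /\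
  (forall (i i' : 'I_n) (j j1 : 'I_d), val j = (val j1).+1 ->
      ~~ eqv (i, j) (i', j) -> ~~ eqv (i, j1) (i', j1)).

Definition satisfies_CR (n d k : nat) (e : seq (ordlt d k)) (Y : 'I_n -> 'I_k)
    (le : 'I_n * 'I_d -> 'I_n * 'I_d -> bool) : Prop :=
  exists p : 'I_n -> ordlt d k,
    perm_eq e [seq p i | i <- enum 'I_n] /\
    (forall i, (p i).1 = Y i) /\
    (forall (u v : 'I_n * 'I_d), le u v = ((p u.1).2 u.2 <= (p v.1).2 v.2)%N).

Definition infinite_nat_set (G : nat -> Prop) : Prop :=
  forall m, exists g, (m <= g)%N /\ G g.

(* Main.v *)
Require Import Defs.
From mathcomp Require Import all_boot.
From mathcomp Require Import zify.
From Stdlib Require Import ClassicalEpsilon.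
Set Implicit Arguments. Unset Strict Implicit.

Lemma pow2odd_inj a a' x x' :
  2 ^ a * (2 * x + 1) = 2 ^ a' * (2 * x' + 1) -> a = a' /\ x = x'.
Proof.
elim: a a' => [|a IH] [|a'] /=.
- rewrite !expn0 !mul1n => H; split => //; lia.
- rewrite expn0 mul1n expnS -mulnA; set t := _ * _; lia.
- rewrite expn0 mul1n expnS -mulnA; set t := _ * _; lia.
- rewrite !expnS -!mulnA => H.
  have [-> ->] : a = a' /\ x = x' by apply: IH; lia.
  by [].
Qed.

Section Code.
Variable d' : nat.
Fixpoint code (b : {ffun 'I_d'.+1 -> nat}) (k : nat) : nat :=
  match k with 0 => 0 | k.+1 => 2 ^ code b k * (2 * b (inord (d' - k)) + 1) end.

Lemma code_lt (b : {ffun 'I_d'.+1 -> nat}) k : code b k < code b k.+1.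
Proof.
rewrite /=; apply: (@leq_trans (2 ^ code b k)); first by rewrite ltn_expl.
by rewrite leq_pmulr // addn1.
Qed.

Lemma code_mono (b : {ffun 'I_d'.+1 -> nat}) k k' : k < k' -> code b k < code b k'.
Proof.
elim: k' => [//|k' IH]; rewrite ltnS leq_eqVlt => /orP [/eqP ->|H].
  exact: code_lt.
exact: ltn_trans (IH H) (code_lt b k').
Qed.

Lemma code_pos (b : {ffun 'I_d'.+1 -> nat}) k : 0 < code b k.+1.
Proof. by rewrite /= muln_gt0 expn_gt0 addn1. Qed.

Lemma code_inj (b b' : {ffun 'I_d'.+1 -> nat}) k k' : code b k = code b' k' ->
  k = k' /\ forall m, m < k -> b (inord (d' - m)) = b' (inord (d' - m)).
Proof.
elim: k k' => [|k IH] [|k'] //.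
- move=> H; have := code_pos b' k'; by rewrite -H.
- move=> H; have := code_pos b k; by rewrite H.
- rewrite /= => /pow2odd_inj [/IH [-> Hm] Hx]; split => // m.
  rewrite ltnS leq_eqVlt => /orP [/eqP ->|]; first by [].
  exact: Hm.
Qed.

Lemma code_ext (b b' : {ffun 'I_d'.+1 -> nat}) k : (forall m, m < k -> b (inord (d' - m)) = b' (inord (d' - m))) ->
  code b k = code b' k.
Proof.
elim: k => [//|k IH] Hm /=.
rewrite IH ?Hm // => m Hmk; apply: Hm; exact: ltnW.
Qed.

Lemma code_full (b b' : {ffun 'I_d'.+1 -> nat}) : code b d'.+1 = code b' d'.+1 -> b = b'.
Proof.
move=> /code_inj [_ Hm]; apply/ffunP => j.
have Hj : d' - j < d'.+1 by rewrite ltnS leq_subr.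
have := Hm _ Hj.
have -> : d' - (d' - j) = j by have := ltn_ord j; lia.
by rewrite inord_val.
Qed.
End Code.

Fixpoint genum (nx : nat -> nat) (m : nat) : nat :=
  match m with 0 => nx 0 | m.+1 => nx (genum nx m).+1 end.

Lemma genum_mono nx : (forall m, m <= nx m) -> forall a b, a < b -> genum nx a < genum nx b.
Proof.
move=> Hnx a; elim => [//|b IH]; rewrite ltnS leq_eqVlt => /orP [/eqP ->|H] /=.
  exact: Hnx.
exact: leq_trans (IH H) (leq_trans (leqnSn _) (Hnx _)).
Qed.

Lemma genum_inj nx : (forall m, m <= nx m) -> forall a b, genum nx a = genum nx b -> a = b.
Proof.
move=> Hnx a b H; case: (ltngtP a b) => // Hab.
- by have := genum_mono Hnx Hab; rewrite H ltnn.
- by have := genum_mono Hnx Hab; rewrite H ltnn.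
Qed.

Definition olt2 d (a b : {ffun 'I_d -> nat}) :=
  exists j : 'I_d, a j < b j /\ forall j' : 'I_d, j < j' -> a j' = b j'.

Lemma olt_1 d (x y : ordlt d 1) : olt x y <-> olt2 x.2 y.2.
Proof.
case: x y => [x1 x2] [y1 y2]; rewrite /olt /olt2 /=.
have -> : x1 = y1 by rewrite (ord1 x1) (ord1 y1).
by rewrite ltnn; split => [[//|[_ H]]|H]; [exact: H | right].
Qed.

Lemma olt2_irr d (a : {ffun 'I_d -> nat}) : ~ olt2 a a.
Proof. by case=> j; rewrite ltnn => -[]. Qed.

Lemma olt2_asym d (a b : {ffun 'I_d -> nat}) : olt2 a b -> ~ olt2 b a.
Proof.
case=> j1 [H1 E1] [j2 [H2 E2]].
case: (ltngtP j1 j2) => Hj.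
- by move: H2; rewrite (E1 _ Hj) ltnn.
- by move: H1; rewrite (E2 _ Hj) ltnn.
- have Ej : j1 = j2 by apply: val_inj.
  by move: H1; rewrite Ej ltnNge (ltnW H2).
Qed.

Lemma olt2_tri d (a b : {ffun 'I_d -> nat}) : a <> b -> olt2 a b \/ olt2 b a.
Proof.
move=> Hab.
have [j0 Hj0] : exists j0, a j0 != b j0.
  apply/existsP; apply: contraT; rewrite negb_exists => /forallP H.
  by case: Hab; apply/ffunP => j; apply/eqP; have := H j; rewrite negbK.
case: (@arg_maxnP _ j0 (fun j => a j != b j) (fun j : 'I_d => nat_of_ord j) Hj0) => j Hj Hmax.
have E : forall j' : 'I_d, j < j' -> a j' = b j'.
  move=> j' Hjj'; apply/eqP; apply: contraT => Hn.
  by move: (Hmax _ Hn) => /=; rewrite leqNgt Hjj'.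
case: (ltngtP (a j) (b j)) => Hc.
- by left; exists j.
- by right; exists j; split => // j' H; rewrite E.
- by move: Hj; rewrite Hc eqxx.
Qed.

Lemma map_nth_enum T (x0 : T) (s : seq T) n : size s = n ->
  [seq nth x0 s i | i : 'I_n <- enum 'I_n] = s.
Proof.
move=> Hs; rewrite (map_comp (nth x0 s) (@nat_of_ord n)) val_enum_ord.
by rewrite map_nth_iota0 -Hs // take_size.
Qed.

Section Fa.
Variable d' : nat.
Variable g : nat -> nat.
Hypothesis gm : forall a b, a < b -> g a < g b.
Definition Fa (a : {ffun 'I_d'.+1 -> nat}) : {ffun 'I_d'.+1 -> nat} :=
  [ffun j : 'I_d'.+1 => g (code a (d'.+1 - j))].

Lemma Fa_mono a b : olt2 a b -> olt2 (Fa a) (Fa b).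
Proof.
case=> j [Hj E]; exists j; split.
  rewrite !ffunE; apply: gm.
  have -> : d'.+1 - j = (d' - j).+1 by have := ltn_ord j; lia.
  rewrite /= (@code_ext d' a b); last first.
    move=> m Hm; apply: E; rewrite inordK; [lia | rewrite ltnS; exact: leq_subr].
  have -> : (inord (d' - (d' - j)) : 'I_d'.+1) = j.
    apply: val_inj; rewrite /= inordK; have := ltn_ord j; lia.
  rewrite ltn_pmul2l ?expn_gt0 //; lia.
move=> j' Hj'; rewrite !ffunE; congr g; apply: code_ext => m Hm; apply: E.
rewrite inordK; [have := ltn_ord j'; lia | rewrite ltnS; exact: leq_subr].
Qed.

Lemma Fa_inj a b : Fa a = Fa b -> a = b.
Proof.
move/ffunP => /(_ ord0); rewrite !ffunE subn0 => H.
apply: code_full.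
case: (ltngtP (code a d'.+1) (code b d'.+1)) => // /gm; by rewrite H ltnn.
Qed.

Lemma Fa_refl a b : olt2 (Fa a) (Fa b) -> olt2 a b.
Proof.
move=> H; have [Eab|Nab] := eqVneq a b.
  by subst; case: (olt2_irr H).
case: (olt2_tri (elimN eqP Nab)) => // /Fa_mono H'.
by case: (olt2_asym H H').
Qed.
End Fa.
Unset Implicit Arguments. Set Strict Implicit.

Lemma lt_and a b : a < b -> (a <= b) && ~~ (b <= a).
Proof. by move=> H; rewrite (ltnW H) -ltnNge H. Qed.

Theorem lemma8p2 (n d : nat) (G : nat -> Prop) :
  infinite_nat_set G ->
  exists H : ordlt d 1 -> Prop,
    order_equiv_full H /\
    forall e : seq (ordlt d 1), is_nsubset n H e ->
      (exists (Y : 'I_n -> 'I_1) (le : 'I_n * 'I_d -> 'I_n * 'I_d -> bool),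
          is_CR Y le /\ satisfies_CR e Y le) /\
      (forall x, x \in e -> forall j : 'I_d, G (x.2 j)).
Proof.
move=> HG.
pose nx m := proj1_sig (constructive_indefinite_description _ (HG m)).
have Hnx m : m <= nx m /\ G (nx m) := proj2_sig (constructive_indefinite_description _ (HG m)).
pose g := genum nx.
have Hle m : m <= nx m by case: (Hnx m).
have gG m : G (g m) by case: m => [|m] /=; [exact: (Hnx 0).2 | exact: (Hnx _).2].
have gm := genum_mono Hle.
case: d => [|d'].
- exists (fun _ => True); split.
    exists id; split; first by [].
    by split; [move=> y _; exists y|].
  move=> e [Hu Hs _]; split; last by move=> x _ [].
  pose x0 : ordlt 0 1 := (ord0, [ffun j => 0]).
  have Hall : forall x y : ordlt 0 1, x = y.
    case=> [x1 x2] [y1 y2]; rewrite (ord1 x1) (ord1 y1); congr pair.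
    by apply/ffunP => -[].
  have Hn : n <= 1.
    rewrite -Hs; apply: (@uniq_leq_size _ e [:: x0] Hu) => x _.
    by rewrite (Hall x x0) mem_seq1.
  exists (fun _ => ord0), (fun u v : 'I_n * 'I_0 => (nth x0 e u.1).2 u.2 <= (nth x0 e v.1).2 v.2).
  split; last first.
    exists (nth x0 e); split; first by rewrite map_nth_enum.
    by split => [i|//]; exact: ord1.
  split; first by move=> u v; exact: leq_total.
  split; first by move=> u v w; exact: leq_trans.
  split; first by [].
  split; first by move=> _ i i' Hii'; have := ltn_ord i'; lia.
  split; first by [].
  split; first by move=> ? [].
  split; first by move=> ? ? [].
  by move=> ? ? [].
- pose F (x : ordlt d'.+1 1) : ordlt d'.+1 1 := (x.1, Fa g x.2).
  exists (fun y => exists x, y = F x); split.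
    exists F; split; first by move=> x; exists x.
    split; first by move=> y [x ->]; exists x.
    move=> x y; rewrite !olt_1 /=; split; [exact: Fa_mono | exact: Fa_refl].
  move=> e [Hu Hs Hin]; split; last first.
    by move=> x /Hin [z ->] j; rewrite /= ffunE.
  pose key (x : ordlt d'.+1 1) := x.2 ord0.
  pose r := fun x y : ordlt d'.+1 1 => key x <= key y.
  have rtot : total r by move=> x y; exact: leq_total.
  have rtr : transitive r by move=> x y z; exact: leq_trans.
  pose s := sort r e.
  pose x0 : ordlt d'.+1 1 := (ord0, [ffun=> 0]).
  pose p := fun i : 'I_n => nth x0 s i.
  have Hsz : size s = n by rewrite size_sort.
  have Hps : perm_eq e s by rewrite perm_sym perm_sort perm_refl.
  have Hsu : uniq s by rewrite sort_uniq.
  have Hpin i : p i \in e by rewrite (perm_mem Hps) mem_nth // Hsz.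
  have HpF i : exists z, p i = F z by exact: Hin.
  have Fval (z : ordlt d'.+1 1) j : (F z).2 j = g (code z.2 (d'.+1 - j)) by rewrite /= ffunE.
  have Hkey (i i' : 'I_n) : i < i' -> key (p i) < key (p i').
    move=> Hii'.
    have Hle' : key (p i) <= key (p i').
      by apply: (sorted_ltn_nth rtr x0 (sort_sorted rtot e)) => //; rewrite inE Hsz.
    rewrite ltn_neqAle Hle' andbT; apply/eqP => Heq.
    have : p i != p i' by rewrite /p nth_uniq ?Hsz // neq_ltn Hii'.
    case: (HpF i) (HpF i') Heq => z -> [w ->]; rewrite /key !Fval !subn0 => Heq.
    have Ec : code z.2 d'.+1 = code w.2 d'.+1.
      by apply: (genum_inj Hle).
    have E2 := code_full Ec.
    case: z w E2 {Heq Ec} => [z1 z2] [w1 w2] /= ->.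
    by rewrite (ord1 z1) (ord1 w1) eqxx.
  exists (fun _ => ord0), (fun u v : 'I_n * 'I_d'.+1 => (p u.1).2 u.2 <= (p v.1).2 v.2).
  split; last first.
    exists p; split; first by rewrite map_nth_enum.
    by split => [i|//]; exact: ord1.
  split; first by move=> u v; exact: leq_total.
  split; first by move=> u v w; exact: leq_trans.
  split.
    move=> _ j i i' Hj Hii' /=.
    have -> : j = ord0 by apply: val_inj.
    by apply: lt_and; exact: (Hkey _ _ Hii').
  split; first by [].
  split; first by [].
  split.
    move=> i j j' Hjj' /=; apply: lt_and.
    case: (HpF i) => z ->; rewrite !Fval; apply: gm; apply: code_mono.
    have := ltn_ord j; have := ltn_ord j'; lia.
  split.
    move=> i i' j j' /= Heqv.
    have E : (p i).2 j = (p i').2 j' by apply/eqP; rewrite eqn_leq.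
    case: (HpF i) (HpF i') E => z -> [w ->]; rewrite !Fval => /(genum_inj Hle).
    move=> /code_inj [Ek _]; apply: ord_inj.
    have := ltn_ord j; have := ltn_ord j'; lia.
  move=> i i' j j1 Hj /=; apply: contra => Heqv.
  have E : (p i).2 j1 = (p i').2 j1 by apply/eqP; rewrite eqn_leq.
  suff -> : (p i).2 j = (p i').2 j by rewrite leqnn.
  case: (HpF i) (HpF i') E => z -> [w ->]; rewrite !Fval => /(genum_inj Hle).
  have Hj' : nat_of_ord j = (nat_of_ord j1).+1 := Hj.
  have -> : d'.+1 - j1 = (d'.+1 - j).+1 by have := ltn_ord j; lia.
  move=> /code_inj [_ Hm]; congr g; apply: code_ext => m Hm'; apply: Hm.
  exact: ltnW.
Qed.
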